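(* Let $\mathcal G=(\mathcal V,\mathcal E,W)$ be a network, $h^-\le h^+$ in $\mathbb R^{\mathcal V}$ and $\mathcal H=\prod_i[h_i^-,h_i^+]$. The following are equivalent: (a) the coordination game on $\mathcal G$ is $\mathcal H$-robustly unpolarizable (for every $h\in\mathcal H$ it has no equilibrium outside $\{\pm\mathbf 1\}$); (b) $\mathcal G$ is $\mathcal H$-robustly indecomposable (i.e., $h$-indecomposable for every $h\in\mathcal H$); (c) $\mathcal G$ is $(h^-,h^+)$-indecomposable.
   Context: A network is $\mathcal G=(\mathcal V,\mathcal E,W)$ with finite node set $\mathcal V$, links $\mathcal E\subseteq\mathcal V\times\mathcal V$, weight matrix $W\in\mathbb R_+^{\mathcal V\times\mathcal V}$ with zero diagonal, $W_{ij}>0$ iff $(i,j)\in\mathcal E$; for $\mathcal S\subseteq\mathcal V$, $w_i^{\mathcal S}=\sum_{j\in\mathcal S}W_{ij}$. $\mathcal X=\{-1,+1\}^{\mathcal V}$. Indecomposability: for $h^-\le h^+$, $\mathcal G$ is $(h^-,h^+)$-indecomposable if for every partition $\mathcal V=\mathcal V^+\cup\mathcal V^-$ into two disjoint nonempty sets there exist a sign $s\in\{-,+\}$ and a node $i\in\mathcal V^s$ with $w_i^{\mathcal V^s}+s\,h_i^s<w_i^{\mathcal V^{-s}}$ (here $s\,h_i^s$ means $+h_i^+$ if $s=+$ and $-h_i^-$ if $s=-$, and $-s$ is the opposite sign). $\mathcal G$ is $h$-indecomposable if it is $(h,h)$-indecomposable. Coordination game with external field $h$: players $\mathcal V$, actions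 $\{\pm1\}$, utilities $u_i(x)=x_i(\sum_jW_{ij}x_j+h_i)$; $x^*$ is an equilibrium if for every $i$, $x_i^*$ maximizes $u_i(\cdot,x^*_{-i})$ over $\{\pm1\}$. *)

(* Defs.v *)
From HB Require Import structures.
From mathcomp Require Import all_boot all_order all_algebra.
Set Implicit Arguments. Unset Strict Implicit. Unset Printing Implicit Defensive.
Import Order.TTheory GRing.Theory Num.Theory.
Local Open Scope ring_scope.

Section Defs.
Variables (R : realFieldType) (V : finType).

(* Network weights: W i j > 0 iff (i,j) is a link; zero diagonal, nonnegative. *)
Definition network (W : V -> V -> R) : Prop :=
  (forall i, W i i = 0) /\ (forall i j, 0 <= W i j).

Definition wdeg (W : V -> V -> R) (i : V) (S : {set V}) : R :=
  \sum_(j in S) W i j.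

Definition indecomposable2 (W : V -> V -> R) (hm hp : V -> R) : Prop :=
  forall Vp : {set V}, Vp != set0 -> ~: Vp != set0 ->
    (exists2 i, i \in Vp & wdeg W i Vp + hp i < wdeg W i (~: Vp)) \/
    (exists2 i, i \in ~: Vp & wdeg W i (~: Vp) - hm i < wdeg W i Vp).

Definition indecomposable (W : V -> V -> R) (h : V -> R) : Prop :=
  indecomposable2 W h h.

Definition is_config (x : V -> R) : Prop := forall i, x i = 1 \/ x i = -1.

Definition utility (W : V -> V -> R) (h : V -> R) (i : V) (x : V -> R) : R :=
  x i * (\sum_j W i j * x j + h i).

Definition upd (x : V -> R) (i : V) (a : R) : V -> R :=
  fun j => if j == i then a else x j.

Definition equilibrium (W : V -> V -> R) (h : V -> R) (x : V -> R) : Prop :=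
  is_config x /\
  forall i (a : R), (a = 1 \/ a = -1) ->
    utility W h i (upd x i a) <= utility W h i x.

Definition in_box (hm hp h : V -> R) : Prop := forall i, hm i <= h i <= hp i.

Definition robustly_unpolarizable (W : V -> V -> R) (hm hp : V -> R) : Prop :=
  forall h, in_box hm hp h -> forall x, equilibrium W h x ->
    (forall i, x i = 1) \/ (forall i, x i = -1).

Definition robustly_indecomposable (W : V -> V -> R) (hm hp : V -> R) : Prop :=
  forall h, in_box hm hp h -> indecomposable W h.

End Defs.

(* Main.v *)
Require Import Defs.
From HB Require Import structures.
From mathcomp Require Import all_boot all_order all_algebra.
From mathcomp Require Import ring lra.
From Stdlib Require Import Classical.
Import Order.TTheory GRing.Theory Num.Theory.
Local Open Scope ring_scope.

Section Aux.
Variables (R : realFieldType) (V : finType).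

Lemma sumx (W : V -> V -> R) (x : V -> R) (Vp : {set V}) i :
  (forall j, x j = if j \in Vp then 1 else -1) ->
  \sum_j W i j * x j = wdeg W i Vp - wdeg W i (~: Vp).
Proof.
move=> hx; rewrite (bigID (fun j => j \in Vp)) /= /wdeg.
congr (_ + _).
  by apply: eq_bigr => j jV; rewrite hx jV mulr1.
rewrite (eq_bigl (fun j => j \in ~: Vp)); last by move=> j; rewrite in_setC.
rewrite -sumrN; apply: eq_bigr => j jV; rewrite hx.
by rewrite in_setC in jV; rewrite (negbTE jV) mulrN1.
Qed.

Lemma eq_char (W : V -> V -> R) h x : network W -> is_config x ->
  equilibrium W h x <-> forall i, 0 <= x i * (\sum_j W i j * x j + h i).
Proof.
move=> [W0 _] cx.
have U : forall i a, utility W h i (upd x i a) =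
    a * (\sum_j W i j * x j + h i).
  move=> i a; rewrite /utility /upd eqxx; congr (_ * (_ + _)).
  apply: eq_bigr => j _; case: eqP => [->|//].
  by rewrite W0 !mul0r.
have Ux : forall i, utility W h i x = x i * (\sum_j W i j * x j + h i) by [].
split.
- move=> [_ E] i; have := E i (- x i).
  rewrite U Ux mulNr.
  have : x i = 1 \/ x i = -1 by apply: cx.
  case=> ->; [move=> H; have := H (or_intror erefl) | move=> H; have := H (or_introl (opprK 1))];
  set S := (\sum_j _ + _); lra.
- move=> H; split => // i a ha; rewrite U Ux; have := H i.
  set S := (\sum_j _ + _).
  case: (cx i) => ->; case: ha => ->; lra.
Qed.

End Aux.

Theorem theorem3 (R : realFieldType) (V : finType) (W : V -> V -> R)
  (hm hp : V -> R) :
  network W -> (forall i, hm i <= hp i) ->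
  (robustly_unpolarizable W hm hp <-> robustly_indecomposable W hm hp) /\
  (robustly_indecomposable W hm hp <-> indecomposable2 W hm hp).
Proof.
move=> nW hmp; split; split.
- move=> A h hb Vp ne1 ne2.
  apply: NNPP => Hn.
  have Hp : forall i, i \in Vp -> wdeg W i (~: Vp) <= wdeg W i Vp + h i.
    move=> i iV; rewrite leNgt; apply/negP => lt; apply: Hn; left; by exists i.
  have Hm : forall i, i \in ~: Vp -> wdeg W i Vp <= wdeg W i (~: Vp) - h i.
    move=> i iV; rewrite leNgt; apply/negP => lt; apply: Hn; right; by exists i.
  pose x := fun j : V => if j \in Vp then (1:R) else -1.
  have cx : is_config x by move=> j; rewrite /x; case: (j \in Vp); [left|right].
  have ex : equilibrium W h x.
    apply/eq_char => // i; rewrite (@sumx _ _ W _ Vp) //.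
    rewrite /x; case iV: (i \in Vp).
      by have := Hp i iV; rewrite mul1r; lra.
    have := Hm i; rewrite in_setC iV => /(_ isT); lra.
  case: (A h hb x ex) => H.
    case/set0Pn: ne2 => j; rewrite in_setC => jV.
    by have := H j; rewrite /x (negbTE jV) => E; move: E; lra.
  case/set0Pn: ne1 => j jV.
  by have := H j; rewrite /x jV => E; move: E; lra.
- move=> A h hb x ex.
  have cx : is_config x by case: ex.
  have := proj1 (@eq_char _ _ W h x nW cx) ex => E.
  pose Vp := [set i | x i == 1].
  have hx : forall j, x j = if j \in Vp then 1 else -1.
    move=> j; rewrite inE; case: (cx j) => ->; first by rewrite eqxx.
    by rewrite (_ : (-1 == 1) = false) //; apply/eqP; lra.
  have [V0|ne1] := eqVneq Vp set0.
    right => i; rewrite hx V0 in_set0 //.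
  have [V1|ne2] := eqVneq (~: Vp) set0.
    left => i; rewrite hx; have : i \notin ~: Vp by rewrite V1 in_set0.
    by rewrite in_setC negbK => ->.
  case: (A h hb Vp ne1 ne2) => [[i iV lt]|[i iV lt]].
    have := E i; rewrite (@sumx _ _ W _ Vp) // hx iV; lra.
  have := E i; rewrite (@sumx _ _ W _ Vp) // hx.
  rewrite in_setC in iV; rewrite (negbTE iV); lra.
- move=> A Vp ne1 ne2.
  pose h := fun i => if i \in Vp then hp i else hm i.
  have hb : in_box hm hp h.
    move=> i; rewrite /h; case: (i \in Vp); apply/andP; split => //;
    by have := hmp i; lra.
  case: (A h hb Vp ne1 ne2) => [[i iV lt]|[i iV lt]].
    by left; exists i => //; move: lt; rewrite /h iV.
  right; exists i => //; move: lt; rewrite /h.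
  by rewrite in_setC in iV; rewrite (negbTE iV).
- move=> A h hb Vp ne1 ne2.
  case: (A Vp ne1 ne2) => [[i iV lt]|[i iV lt]].
    left; exists i => //; have := hb i; move/andP => [_ b]; lra.
  right; exists i => //; have := hb i; move/andP => [b _]; lra.
Qed.
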